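(* Consider the following implementation of the extended weak descriptor abstract data type (described in the context), with unbounded sequence numbers, and with each operation assigned the linearization point listed in the context. Let $e$ be any execution of this implementation, and let $O_1, O_2, \ldots, O_k$ be the descriptor operations executed in $e$, in the order of their linearization points. Then the responses of $O_1, O_2, \ldots, O_k$ respect the semantics of the extended weak descriptor ADT.
   Context: Asynchronous shared-memory system of processes $1,\ldots,n$; each process has private memory, and shared memory consists of base objects (read/write registers supporting read, write and compare-and-swap (CAS)). An execution is an alternating sequence of configurations and atomic steps starting from the initial configuration. Extended weak descriptor ADT. A descriptor has a type $T$, which determines a set of immutable fields and a set of mutable fields. Operations: $\mathrm{CreateNew}(T, v_1, v_2, \ldots)$ creates a descriptor of type $T$ whose fields are initialized to the given values, and returns a descriptor pointer never before returned by CreateNew. A descriptor created by a CreateNew of type $T$ performed by process $p$ is valid from its creation until $p$ performs its next CreateNew of the same type $T$, after which it is invalid forever. An operation on a valid (resp. invalid) descriptor is valid (resp. invalid). Valid operations: $\mathrm{ReadField}(des,f,dv)$ returns the current value of field $f$ of the descriptor; $\mathrm{ReadImmutables}(des)$ returns the values of all immutable fields; $\mathrm{WriteField}(des,f,v)$ stores $v$ in field $f$; $\mathrm{CASField}(des,f,exp,v)$ lets $v_f$ be the value of $f$ just before, stores $v$ in $f$ if $v_f=exp$, and returns $v_f$. Invalid operations have no effect on any object; an invalid ReadField returns its default argument $dv$, and invalid ReadImmutables and CASField return a special value $\bot$ never contained in any descriptor field. (WriteField and CASField are applied only to mutable fields.) Implementation. For each type $T$ and process $p$ there is one shared object $D_{T,p}$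 holding the immutable fields of type $T$ and a single word $mutables$ containing a sequence number $seq$ (initially $0$) together with all mutable fields; $mutables$ is read and CASed atomically as one word. A descriptor pointer is a pair $\langle q, s\rangle$ of a process name and a sequence number. - $\mathrm{CreateNew}(T, v_1,\ldots)$ by $p$: $oldseq := D_{T,p}.mutables.seq$; write $D_{T,p}.mutables.seq := oldseq+1$; write each field of $D_{T,p}$ (immutable fields directly, mutable fields inside $mutables$) with its corresponding value; write $D_{T,p}.mutables.seq := oldseq+2$; return $\langle p, oldseq+2\rangle$. - $\mathrm{ReadField}(\langle q,s\rangle, f, dv)$: read $result :=$ field $f$ of $D_{T,q}$ (from $D_{T,q}.f$ if immutable, from $D_{T,q}.mutables.f$ if mutable); then read $D_{T,q}.mutables.seq$; if it differs from $s$ return $dv$, else return $result$. - $\mathrm{ReadImmutables}(\langle q,s\rangle)$: read every immutable field of $D_{T,q}$; then read $D_{T,q}.mutables.seq$; if it differs from $s$ return $\bot$, else return the values read. - $\mathrm{WriteField}(\langle q,s\rangle, f, v)$: repeat: $exp := D_{T,q}.mutables$; if $exp.seq\ne s$ return; let $new$ be $exp$ with subfield $f$ replaced by $v$; if $\mathrm{CAS}(D_{T,q}.mutables, exp, new)$ succeeds, return. - $\mathrm{CASField}(\langle q,s\rangle, f, fexp, fnew)$: repeat: $exp := D_{T,q}.mutables$; if $exp.seq\ne s$ return $\bot$; if $exp.f\ne fexp$ return $exp.f$; let $new$ be $exp$ with subfield $f$ replaced by $fnew$; if $\mathrm{CAS}(D_{T,q}.mutables, exp, new)$ succeeds, return $fexp$.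 Linearization points. CreateNew: its first write to the sequence number (setting it to $oldseq+1$). ReadField: if it returns $dv$, at its read of the sequence number; otherwise at its read of field $f$. ReadImmutables: at its read of the sequence number. WriteField: if it returns because $exp.seq\ne s$, at its last read of $mutables$; otherwise at its successful CAS. CASField: if it returns $\bot$ or returns $exp.f$, at its last read of $mutables$; if it returns after a successful CAS, at that CAS. *)

(* Defs.v *)
From Stdlib Require List.
From mathcomp Require Import all_boot.
Set Implicit Arguments.
Unset Strict Implicit.
Unset Printing Implicit Defensive.

Section WeakDescriptors.

(* Ty     : descriptor types;
   nimm T : number of immutable fields of type T (indices 0 .. nimm T - 1);
   nmut T : number of mutable fields of type T (indices 0 .. nmut T - 1);
   V      : field values;
   vdef   : an arbitrary default value, only used as the default argument of
            [nth]/[set_nth]; it is never consulted for well-formed invocations;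
   n      : number of processes, named by 'I_n. *)
Variables (Ty : eqType) (nimm nmut : Ty -> nat) (V : eqType) (vdef : V) (n : nat).

Definition ptr := ('I_n * nat)%type.

Inductive field := FImm of nat | FMut of nat.

Inductive op :=
| OCreate of Ty & seq V & seq V            (* CreateNew(T, immutables, mutables) *)
| ORead of Ty & ptr & field & V            (* ReadField(des, f, dv) on a type-T descriptor *)
| OReadImm of Ty & ptr
| OWrite of Ty & ptr & nat & V             (* WriteField(des, f, v), f a mutable field *)
| OCas of Ty & ptr & nat & V & V.          (* CASField(des, f, exp, new), f mutable *)

(* Responses; RBot is the special value bottom, RUnit the (empty) response of WriteField. *)
Inductive resp :=
| RPtr of ptr | RVal of V | RVals of seq V | RBot | RUnit.

Definition upd (A : eqType) (B : Type) (f : A -> B) (a : A) (b : B) : A -> B :=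
  fun x => if x == a then b else f x.

Record astate := AState {
  acreated : Ty -> ptr -> bool;
  acont : Ty -> ptr -> (seq V * seq V);     (* (immutable fields, mutable fields) *)
  acur : Ty -> 'I_n -> option ptr           (* the last descriptor of type T created by p *)
}.

Definition ainit : astate :=
  AState (fun _ _ => false) (fun _ _ => ([::], [::])) (fun _ _ => None).

Definition avalid (s : astate) (T : Ty) (d : ptr) : Prop :=
  exists p, acur s T p = Some d.

Definition afield (c : seq V * seq V) (f : field) : V :=
  match f with FImm i => nth vdef c.1 i | FMut j => nth vdef c.2 j end.

Definition aset_mut (s : astate) (T : Ty) (d : ptr) (j : nat) (v : V) : astate :=
  AState (acreated s)
    (upd (acont s) T (upd (acont s T) d ((acont s T d).1, set_nth vdef (acont s T d).2 j v)))
    (acur s).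

Inductive spec_step (s : astate) (p : 'I_n) : op -> resp -> astate -> Prop :=
| SCreate T a b d :
    ~~ acreated s T d ->
    spec_step s p (OCreate T a b) (RPtr d)
      (AState (upd (acreated s) T (upd (acreated s T) d true))
              (upd (acont s) T (upd (acont s T) d (a, b)))
              (upd (acur s) T (upd (acur s T) p (Some d))))
| SReadValid T d f dv :
    avalid s T d -> spec_step s p (ORead T d f dv) (RVal (afield (acont s T d) f)) s
| SReadInvalid T d f dv :
    ~ avalid s T d -> spec_step s p (ORead T d f dv) (RVal dv) s
| SReadImmValid T d :
    avalid s T d -> spec_step s p (OReadImm T d) (RVals (acont s T d).1) s
| SReadImmInvalid T d :
    ~ avalid s T d -> spec_step s p (OReadImm T d) RBot s
| SWriteValid T d j v :
    avalid s T d -> spec_step s p (OWrite T d j v) RUnit (aset_mut s T d j v)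
| SWriteInvalid T d j v :
    ~ avalid s T d -> spec_step s p (OWrite T d j v) RUnit s
| SCasValidEq T d j fexp fnew :
    avalid s T d -> nth vdef (acont s T d).2 j = fexp ->
    spec_step s p (OCas T d j fexp fnew) (RVal fexp) (aset_mut s T d j fnew)
| SCasValidNeq T d j fexp fnew :
    avalid s T d -> nth vdef (acont s T d).2 j <> fexp ->
    spec_step s p (OCas T d j fexp fnew) (RVal (nth vdef (acont s T d).2 j)) s
| SCasInvalid T d j fexp fnew :
    ~ avalid s T d -> spec_step s p (OCas T d j fexp fnew) RBot s.

(* A sequence of (process, operation, response) -- where the response is
   [None] for a linearized operation that has not returned yet -- respects the
   semantics of the ADT when starting from s. *)
Fixpoint spec_legal (s : astate) (l : seq ('I_n * op * option resp)) : Prop :=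
  match l with
  | [::] => True
  | (p, o, r) :: l' =>
      exists r' s', spec_step s p o r' s' /\ (forall x, r = Some x -> x = r') /\
                    spec_legal s' l'
  end.

(* Shared memory: for each type T and process p the object D_{T,p}, with one
   register per immutable field and one word [mutables] = (seq, mutable fields). *)
Record mem := Mem {
  mimm : Ty -> 'I_n -> nat -> V;
  mmut : Ty -> 'I_n -> (nat * seq V)
}.

(* Local state (program counter + local variables) of a process.  The [t]
   arguments are ghost records of the time of the linearization point. *)
Inductive lstate :=
| LIdle
| LCN0 of Ty & seq V & seq V                          (* CreateNew: read seq *)
| LCN1 of Ty & seq V & seq V & nat                    (* write seq := old+1 (lin. point) *)
| LCNimm of Ty & seq V & seq V & nat & nat & nat      (* old, t, k : write immutable k *)
| LCNmut of Ty & seq V & seq V & nat & nat & nat      (* old, t, k : write mutable k *)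
| LCN2 of Ty & seq V & seq V & nat & nat              (* old, t : write seq := old+2 *)
| LRF0 of Ty & ptr & field & V                        (* ReadField: read field *)
| LRF1 of Ty & ptr & field & V & V & nat              (* result, t : read seq *)
| LRI of Ty & ptr & nat & seq V                       (* ReadImmutables: k, values so far *)
| LWF0 of Ty & ptr & nat & V                          (* WriteField: read mutables *)
| LWF1 of Ty & ptr & nat & V & (nat * seq V)          (* CAS with exp *)
| LCS0 of Ty & ptr & nat & V & V                      (* CASField: read mutables *)
| LCS1 of Ty & ptr & nat & V & V & (nat * seq V).     (* CAS with exp *)

(* History entry: (time of the linearization point, (process, op, response)). *)
Definition hentry := (nat * ('I_n * op * resp))%type.

Definition returned (h : seq hentry) (T : Ty) (d : ptr) : Prop :=
  exists t p a b, List.In (t, (p, OCreate T a b, RPtr d)) h.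

Definition wf_inv (h : seq hentry) (o : op) : Prop :=
  match o with
  | OCreate T a b => size a = nimm T /\ size b = nmut T
  | ORead T d f _ =>
      returned h T d /\ (match f with FImm i => i < nimm T | FMut j => j < nmut T end)
  | OReadImm T d => returned h T d
  | OWrite T d j _ => returned h T d /\ j < nmut T
  | OCas T d j _ _ => returned h T d /\ j < nmut T
  end.

Definition start (o : op) : lstate :=
  match o with
  | OCreate T a b => LCN0 T a b
  | ORead T d f dv => LRF0 T d f dv
  | OReadImm T d => LRI T d 0 [::]
  | OWrite T d j v => LWF0 T d j v
  | OCas T d j e w => LCS0 T d j e w
  end.

Definition set_imm (m : mem) T (p : 'I_n) (k : nat) (v : V) : mem :=
  Mem (upd (mimm m) T (upd (mimm m T) p (upd (mimm m T p) k v))) (mmut m).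
Definition set_mut (m : mem) T (p : 'I_n) (w : nat * seq V) : mem :=
  Mem (mimm m) (upd (mmut m) T (upd (mmut m T) p w)).

(* Every step that returns is the last shared-memory access of the operation. *)
Inductive pstep (p : 'I_n) (t : nat) (h : seq hentry) (m : mem) :
    lstate -> mem -> lstate -> option hentry -> Prop :=
| PInvoke o : wf_inv h o -> pstep p t h m LIdle m (start o) None
| PCN0 T a b : pstep p t h m (LCN0 T a b) m (LCN1 T a b (mmut m T p).1) None
| PCN1 T a b old :
    pstep p t h m (LCN1 T a b old) (set_mut m T p (old.+1, (mmut m T p).2))
          (LCNimm T a b old t 0) None
| PCNimm T a b old t1 k : k < nimm T ->
    pstep p t h m (LCNimm T a b old t1 k) (set_imm m T p k (nth vdef a k))
          (LCNimm T a b old t1 k.+1) None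
| PCNimmEnd T a b old t1 k : nimm T <= k ->
    pstep p t h m (LCNimm T a b old t1 k) m (LCNmut T a b old t1 0) None
| PCNmut T a b old t1 k : k < nmut T ->
    pstep p t h m (LCNmut T a b old t1 k)
          (set_mut m T p ((mmut m T p).1, set_nth vdef (mmut m T p).2 k (nth vdef b k)))
          (LCNmut T a b old t1 k.+1) None
| PCNmutEnd T a b old t1 k : nmut T <= k ->
    pstep p t h m (LCNmut T a b old t1 k) m (LCN2 T a b old t1) None
| PCN2 T a b old t1 :
    pstep p t h m (LCN2 T a b old t1) (set_mut m T p (old.+2, (mmut m T p).2)) LIdle
          (Some (t1, (p, OCreate T a b, RPtr (p, old.+2))))
| PRF0 T q s f dv :
    pstep p t h m (LRF0 T (q, s) f dv) m
          (LRF1 T (q, s) f dv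
                (match f with FImm i => mimm m T q i | FMut j => nth vdef (mmut m T q).2 j end) t)
          None
| PRF1 T q s f dv x t0 :
    pstep p t h m (LRF1 T (q, s) f dv x t0) m LIdle
          (Some (if (mmut m T q).1 == s then (t0, (p, ORead T (q, s) f dv, RVal x))
                 else (t, (p, ORead T (q, s) f dv, RVal dv))))
| PRI T q s k acc : k < nimm T ->
    pstep p t h m (LRI T (q, s) k acc) m (LRI T (q, s) k.+1 (rcons acc (mimm m T q k))) None
| PRIEnd T q s k acc : nimm T <= k ->
    pstep p t h m (LRI T (q, s) k acc) m LIdle
          (Some (t, (p, OReadImm T (q, s), if (mmut m T q).1 == s then RVals acc else RBot)))
| PWF0ret T q s j v : (mmut m T q).1 != s ->
    pstep p t h m (LWF0 T (q, s) j v) m LIdle (Some (t, (p, OWrite T (q, s) j v, RUnit)))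
| PWF0 T q s j v : (mmut m T q).1 = s ->
    pstep p t h m (LWF0 T (q, s) j v) m (LWF1 T (q, s) j v (mmut m T q)) None
| PWF1ok T q s j v w : mmut m T q = w ->
    pstep p t h m (LWF1 T (q, s) j v w) (set_mut m T q (w.1, set_nth vdef w.2 j v)) LIdle
          (Some (t, (p, OWrite T (q, s) j v, RUnit)))
| PWF1fail T q s j v w : mmut m T q <> w ->
    pstep p t h m (LWF1 T (q, s) j v w) m (LWF0 T (q, s) j v) None
| PCS0bot T q s j e w : (mmut m T q).1 != s ->
    pstep p t h m (LCS0 T (q, s) j e w) m LIdle (Some (t, (p, OCas T (q, s) j e w, RBot)))
| PCS0neq T q s j e w : (mmut m T q).1 = s -> nth vdef (mmut m T q).2 j != e ->
    pstep p t h m (LCS0 T (q, s) j e w) m LIdle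
          (Some (t, (p, OCas T (q, s) j e w, RVal (nth vdef (mmut m T q).2 j))))
| PCS0 T q s j e w : (mmut m T q).1 = s -> nth vdef (mmut m T q).2 j = e ->
    pstep p t h m (LCS0 T (q, s) j e w) m (LCS1 T (q, s) j e w (mmut m T q)) None
| PCS1ok T q s j e w x : mmut m T q = x ->
    pstep p t h m (LCS1 T (q, s) j e w x) (set_mut m T q (x.1, set_nth vdef x.2 j w)) LIdle
          (Some (t, (p, OCas T (q, s) j e w, RVal e)))
| PCS1fail T q s j e w x : mmut m T q <> x ->
    pstep p t h m (LCS1 T (q, s) j e w x) m (LCS0 T (q, s) j e w) None.

(* Configurations: shared memory, local states, ghost clock (number of steps so
   far) and ghost history of completed operations. *)
Record config := Config {
  cmem : mem;
  cloc : 'I_n -> lstate;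
  cclk : nat;
  chist : seq hentry
}.

Inductive step : config -> config -> Prop :=
| Step c p m' l' e :
    pstep p (cclk c) (chist c) (cmem c) (cloc c p) m' l' e ->
    step c (Config m' (upd (cloc c) p l') (cclk c).+1
                   (match e with Some x => rcons (chist c) x | None => chist c end)).

Variables (init_imm : Ty -> 'I_n -> nat -> V) (init_mut : Ty -> 'I_n -> seq V).

Definition init_config : config :=
  Config (Mem init_imm (fun T p => (0, init_mut T p))) (fun _ => LIdle) 0 [::].

Inductive reachable : config -> Prop :=
| Reach0 : reachable init_config
| ReachS c c' : reachable c -> step c c' -> reachable c'.

(* Linearized operations whose linearization point has occurred but which have
   not returned yet: only a CreateNew past its first write to the sequence number. *)
Definition pending (p : 'I_n) (l : lstate) : seq (nat * ('I_n * op * option resp)) :=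
  match l with
  | LCNimm T a b _ t1 _ | LCNmut T a b _ t1 _ | LCN2 T a b _ t1 =>
      [:: (t1, (p, OCreate T a b, None))]
  | _ => [::]
  end.

(* O_1, ..., O_k: the operations whose linearization point lies in the execution,
   in the order of their linearization points (distinct step indices). *)
Definition lin_seq (c : config) : seq ('I_n * op * option resp) :=
  map snd (sort (fun x y : nat * ('I_n * op * option resp) => x.1 <= y.1)
    ([seq (x.1, (x.2.1, Some x.2.2)) | x <- chist c] ++
     flatten [seq pending p (cloc c p) | p <- enum 'I_n])).

End WeakDescriptors.

(* Main.v *)
Require Import Defs.
From mathcomp Require Import all_boot.
Set Implicit Arguments. Unset Strict Implicit. Unset Printing Implicit Defensive.

Section Proof.
Variables (Ty : eqType) (nimm nmut : Ty -> nat) (V : eqType) (vdef : V) (n : nat).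
Variables (init_imm : Ty -> 'I_n -> nat -> V) (init_mut : Ty -> 'I_n -> seq V).
Hypothesis Hinit : forall T p, size (init_mut T p) = nmut T.

Notation lst := (lstate Ty V n).
Notation ast := (astate Ty V n).
Notation ent := (nat * ('I_n * op Ty V n * option (resp V n)))%type.

Definition legal (A : nat -> ast) (x : ent) : Prop :=
  exists r', spec_step vdef (A x.1) x.2.1.1 x.2.1.2 r' (A x.1.+1) /\
             (forall y, x.2.2 = Some y -> y = r').

Lemma in_map_fstE (X : Type) (s : seq (nat * X)) t :
  t \in map fst s -> exists z, List.In z s /\ z.1 = t.
Proof.
elim: s => //= z s IH; rewrite inE => /orP [/eqP ->|/IH [w [Hw Ew]]]; first by exists z; auto.
by exists w; auto.
Qed.

Lemma In_map_fst (X : Type) (s : seq (nat * X)) z :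
  List.In z s -> z.1 \in map fst s.
Proof.
elim: s => //= w s IH [->|Hz]; first by rewrite inE eqxx.
by rewrite inE IH ?orbT.
Qed.

Lemma const_run (A : nat -> ast) t0 k :
  (forall t, t0 <= t -> t < t0 + k -> A t.+1 = A t) -> A (t0 + k) = A t0.
Proof.
elim: k => [|k IH] H; first by rewrite addn0.
rewrite addnS; have -> : A (t0 + k).+1 = A (t0 + k) by apply: H; rewrite ?leq_addr // addnS ltnSn.
apply: IH => t h1 h2; apply: H => //.
by rewrite addnS ltnS ltnW.
Qed.

Lemma legal_sorted (A : nat -> ast) clk : forall (s : seq ent) t0,
  sorted (fun x y : ent => x.1 <= y.1) s -> uniq (map fst s) ->
  (forall x, List.In x s -> t0 <= x.1 /\ x.1 < clk /\ legal A x) ->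
  (forall t, t0 <= t -> t < clk -> t \notin map fst s -> A t.+1 = A t) ->
  spec_legal vdef (A t0) (map snd s).
Proof.
elim=> [|x s IH] t0 //= Hs /andP [Hx Hu] Hin Hgap.
case: x Hs Hx Hin Hgap => t1 [[p o] r] /= Hs Hx Hin Hgap.
have [Ht01 [Ht1 [r' [Hst Hr]]]] := Hin _ (or_introl erefl).
move: Ht01 Ht1 Hst Hr => /= Ht01 Ht1 Hst Hr.
have Hall : forall y, List.In y s -> t1 < y.1.
  move=> y Hy.
  have Hle : t1 <= y.1.
    have Hal : forall (u : ent) (s' : seq ent), path (fun x y : ent => x.1 <= y.1) u s' -> List.In y s' -> u.1 <= y.1.
      move=> u s'; elim: s' u => //= z s' IH' u /andP [Huz Hp] [<-|Hy'] //.
      exact: leq_trans Huz (IH' _ Hp Hy').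
    exact: Hal Hs Hy.
  rewrite ltn_neqAle Hle andbT; apply/negP => /eqP E.
  move: Hx; rewrite E; apply/negP; rewrite negbK.
  exact: In_map_fst Hy.
have EA : A t1 = A t0.
  rewrite -(subnKC Ht01); apply: const_run => t h1 h2.
  rewrite (subnKC Ht01) in h2.
  apply: Hgap => //; first exact: ltn_trans h2 Ht1.
  rewrite inE negb_or neq_ltn h2 /=.
  apply/negP => /in_map_fstE [z [Hz Ez]].
  by move: (Hall _ Hz); rewrite Ez ltnNge (ltnW h2).
exists r', (A t1.+1); split; first by rewrite -EA.
split; first by move=> y /Hr.
apply: IH.
- exact: path_sorted Hs.
- exact: Hu.
- move=> y Hy; have [_ [? ?]] := Hin y (or_intror Hy); by rewrite Hall.
- move=> t h1 h2 h3; apply: Hgap => //; first exact: leq_trans Ht01 (ltnW h1).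
  by rewrite inE negb_or h3 andbT neq_ltn h1 orbT.
Qed.


Definition sig (m : Defs.mem Ty V n) T q := (mmut m T q).1.
Definition mv (m : Defs.mem Ty V n) T q := (mmut m T q).2.

Definition cnT (l : lst) (T : Ty) : option (seq V * seq V * nat) :=
  match l with
  | LCNimm T' a b old _ _ => if T' == T then Some (a, b, old) else None
  | LCNmut T' a b old _ _ => if T' == T then Some (a, b, old) else None
  | LCN2 T' a b old _ => if T' == T then Some (a, b, old) else None
  | _ => None
  end.

Definition ptime (l : lst) : option nat :=
  match l with
  | LCNimm _ _ _ _ t _ => Some t
  | LCNmut _ _ _ _ t _ => Some t
  | LCN2 _ _ _ _ t => Some t
  | _ => None
  end.

Definition rtime (l : lst) : option nat :=
  match l with
  | LRF1 _ _ _ _ _ t => Some t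
  | _ => ptime l
  end.

Definition sdone (cl : 'I_n -> lst) m T q :=
  if cnT (cl q) T is Some (_, _, old) then old else sig m T q.
Definition target (cl : 'I_n -> lst) m T q :=
  if cnT (cl q) T is Some (_, _, old) then old.+2 else sig m T q.

Definition goodc (c : seq V * seq V) (m : Defs.mem Ty V n) T q :=
  size c.1 = nimm T /\ (forall i, i < nimm T -> nth vdef c.1 i = mimm m T q i) /\
  c.2 = mv m T q.

Definition MR (m : Defs.mem Ty V n) (S : ast) (cl : 'I_n -> lst) T q :=
  size (mv m T q) = nmut T /\
  match cnT (cl q) T with
  | Some (a, b, old) => sig m T q = old.+1 /\ acur S T q = Some (q, old.+2) /\
                        acont S T (q, old.+2) = (a, b)
  | None => (sig m T q = 0 /\ acur S T q = None) \/
            (0 < sig m T q /\ acur S T q = Some (q, sig m T q) /\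
             goodc (acont S T (q, sig m T q)) m T q)
  end.

Definition CB (S : ast) (m : Defs.mem Ty V n) cl :=
  forall T q s, acreated S T (q, s) -> s <= target cl m T q.
Definition RB (h : seq (hentry Ty V n)) (m : Defs.mem Ty V n) cl :=
  forall T q s, returned h T (q, s) -> 0 < s <= sdone cl m T q.

Definition CNok (A : nat -> ast) N p T a b old t1 :=
  t1 < N /\ spec_step vdef (A t1) p (OCreate n T a b) (RPtr V (p, old.+2)) (A t1.+1).

Definition fbound T (f : field) := match f with FImm i => i < nimm T | FMut j => j < nmut T end.

Definition LI (h : seq (hentry Ty V n)) (m : Defs.mem Ty V n) (A : nat -> ast) N p (l : lst) : Prop :=
  match l with
  | LIdle => True
  | LCN0 T a b => size a = nimm T /\ size b = nmut T
  | LCN1 T a b old => (size a = nimm T /\ size b = nmut T) /\ old = sig m T p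
  | LCNimm T a b old t1 k => (size a = nimm T /\ size b = nmut T) /\ CNok A N p T a b old t1 /\
      (forall i, i < k -> mimm m T p i = nth vdef a i)
  | LCNmut T a b old t1 k => (size a = nimm T /\ size b = nmut T) /\ CNok A N p T a b old t1 /\
      (forall i, i < nimm T -> mimm m T p i = nth vdef a i) /\
      (forall i, i < k -> nth vdef (mv m T p) i = nth vdef b i)
  | LCN2 T a b old t1 => (size a = nimm T /\ size b = nmut T) /\ CNok A N p T a b old t1 /\
      (forall i, i < nimm T -> mimm m T p i = nth vdef a i) /\ mv m T p = b
  | LRF0 T d f dv => returned h T d /\ fbound T f
  | LRF1 T d f dv x t0 => returned h T d /\ fbound T f /\ t0 < N /\
      (sig m T d.1 = d.2 -> avalid (A t0) T d /\ afield vdef (acont (A t0) T d) f = x)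
  | LRI T d k acc => returned h T d /\ k <= nimm T /\ size acc = k /\
      (sig m T d.1 = d.2 -> forall i, i < k -> nth vdef acc i = mimm m T d.1 i)
  | LWF0 T d j v => returned h T d /\ j < nmut T
  | LWF1 T d j v w => returned h T d /\ j < nmut T /\ w.1 = d.2
  | LCS0 T d j e w => returned h T d /\ j < nmut T
  | LCS1 T d j e w x => returned h T d /\ j < nmut T /\ x.1 = d.2 /\ nth vdef x.2 j = e
  end.

Record InvA (c : config Ty V n) (A : nat -> ast) : Prop := {
  iv_init : A 0 = ainit Ty V n;
  iv_const : forall t, cclk c <= t -> A t = A (cclk c);
  iv_gap : forall t, t < cclk c -> t \notin map fst (chist c) ->
             (forall p, ptime (cloc c p) <> Some t) -> A t.+1 = A t;
  iv_hist : forall x, List.In x (chist c) -> x.1 < cclk c /\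
             spec_step vdef (A x.1) x.2.1.1 x.2.1.2 x.2.2 (A x.1.+1);
  iv_uniq : uniq (map fst (chist c));
  iv_rh : forall p t, rtime (cloc c p) = Some t -> t \notin map fst (chist c);
  iv_rr : forall p p' t, rtime (cloc c p) = Some t -> rtime (cloc c p') = Some t -> p = p';
  iv_mr : forall T q, MR (cmem c) (A (cclk c)) (cloc c) T q;
  iv_cb : CB (A (cclk c)) (cmem c) (cloc c);
  iv_rb : RB (chist c) (cmem c) (cloc c);
  iv_li : forall p, LI (chist c) (cmem c) A (cclk c) p (cloc c p)
}.

Definition oseq (o : option nat) : seq nat := if o is Some t then [:: t] else [::].

Lemma ptime_rtime (l : lst) t : ptime l = Some t -> rtime l = Some t.
Proof. by case: l. Qed.

Lemma pending_fst p (l : lst) : map fst (pending p l) = oseq (ptime l).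
Proof. by case: l. Qed.

Lemma pending_legal h m A N p (l : lst) x :
  LI h m A N p l -> List.In x (pending p l) -> x.1 < N /\ legal A x.
Proof.
case: l => //= [T a b old t1 k|T a b old t1 k|T a b old t1] [_ [[Ht Hs] _]] [<-|//];
  (split; first done); exists (RPtr V (p, old.+2)); split => //.
Qed.

Lemma In_nth (X : Type) (x0 : X) s i : i < size s -> List.In (nth x0 s i) s.
Proof. elim: s i => //= x s IH [|i] /=; [by left | by move=> /IH; right]. Qed.

Lemma In_map_inv (X : Type) (f : nat -> X) (J : seq nat) x :
  List.In x (map f J) -> exists2 i, i \in J & x = f i.
Proof.
elim: J => //= i J IH [<-|/IH [j Hj ->]]; first by exists i; rewrite ?inE ?eqxx.
by exists j; rewrite // inE Hj orbT.
Qed.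

Lemma In_sort (X : Type) (r : rel X) s x : List.In x (sort r s) -> List.In x s.
Proof.
case: s => [|x0 s'] //; set s := x0 :: s'.
move=> Hx; have : List.In x (sort r (mkseq (nth x0 s) (size s))) by rewrite mkseq_nth.
rewrite /mkseq sort_map; case/(@In_map_inv X) => i Hi ->.
apply: In_nth; move: Hi; rewrite mem_sort mem_iota add0n; by case/andP.
Qed.

Lemma In_cat (X : Type) (s1 s2 : seq X) x : List.In x (s1 ++ s2) <-> List.In x s1 \/ List.In x s2.
Proof. elim: s1 => /= [|y s1 IH]; [tauto | rewrite IH; tauto]. Qed.

Lemma In_flatten (X : Type) (ss : seq (seq X)) x :
  List.In x (flatten ss) -> exists s, List.In s ss /\ List.In x s.
Proof.
elim: ss => //= s ss IH /In_cat [H|/IH [s' [H1 H2]]]; first by exists s; auto.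
by exists s'; auto.
Qed.

Lemma In_map (X Y : Type) (f : X -> Y) s y : List.In y (map f s) -> exists x, List.In x s /\ y = f x.
Proof. elim: s => //= x s IH [<-|/IH [z [H ->]]]; [by exists x; auto | by exists z; auto]. Qed.

Lemma mem_flat (F : 'I_n -> option nat) (ps : seq 'I_n) t :
  t \in flatten [seq oseq (F p) | p <- ps] -> exists2 p, p \in ps & F p = Some t.
Proof.
elim: ps => //= p ps IH; rewrite mem_cat => /orP [|/IH [q Hq Eq]].
  by case E: (F p) => [u|] //=; rewrite inE => /eqP ->; exists p; rewrite ?inE ?eqxx.
by exists q; rewrite // inE Hq orbT.
Qed.

Lemma flat_mem (F : 'I_n -> option nat) (ps : seq 'I_n) p t :
  p \in ps -> F p = Some t -> t \in flatten [seq oseq (F p) | p <- ps].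
Proof.
elim: ps => //= q ps IH; rewrite inE mem_cat => /orP [/eqP <- ->|/IH H /H ->];
  by rewrite ?inE ?eqxx ?orbT.
Qed.

Lemma uniq_flat (F : 'I_n -> option nat) (ps : seq 'I_n) :
  uniq ps -> (forall p p' t, F p = Some t -> F p' = Some t -> p = p') ->
  uniq (flatten [seq oseq (F p) | p <- ps]).
Proof.
move=> Hu HF; elim: ps Hu => //= p ps IH /andP [Hp Hu].
rewrite cat_uniq IH // andbT.
case E: (F p) => [t|] //=; rewrite ?andbT ?orbF /=; apply/hasPn => u Hu' //.
rewrite inE; apply/eqP => Eu; subst u; case: (mem_flat Hu') => q Hq Eq.
by move: Hp; rewrite (HF _ _ _ E Eq) Hq.
Qed.

Lemma final_legal c A : InvA c A -> spec_legal vdef (ainit Ty V n) (lin_seq c).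
Proof.
move=> H; rewrite /lin_seq -(iv_init H).
set E := (_ ++ _).
have HfE : map fst E = map fst (chist c) ++
            flatten [seq oseq (ptime (cloc c p)) | p <- enum 'I_n].
  rewrite /E map_cat -map_comp map_flatten -map_comp; congr (_ ++ flatten _).
  by apply: eq_map => p /=; rewrite pending_fst.
have Hsm : map fst (sort (fun x y : ent => x.1 <= y.1) E) = sort leq (map fst E).
  by rewrite sort_map.
apply: (legal_sorted (clk := cclk c)).
- by apply: sort_sorted => x y; exact: leq_total.
- rewrite Hsm sort_uniq HfE cat_uniq (iv_uniq H) /=.
  have -> : uniq (flatten [seq oseq (ptime (cloc c p)) | p <- enum 'I_n]).
    apply: uniq_flat; first exact: enum_uniq.
    by move=> p p' t /ptime_rtime H1 /ptime_rtime H2; exact: (iv_rr H H1 H2).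
  rewrite andbT; apply/hasPn => t /mem_flat [p _ Hp]; exact: (iv_rh H (ptime_rtime Hp)).
- move=> x Hx0; have := In_sort Hx0; case/In_cat => Hx1.
    have [y [Hy ->]] := In_map Hx1.
    have [? ?] := iv_hist H Hy; split => //; split => //.
    by exists y.2.2; split => // ? [->].
  have [s [Hs Hx]] := In_flatten Hx1.
  have [p [_ Es]] := In_map Hs; subst s.
  by have [? ?] := pending_legal (iv_li H p) Hx.
- move=> t _ Ht; rewrite Hsm mem_sort HfE mem_cat negb_or => /andP [H1 H2].
  apply: (iv_gap H) => // p Hp; move: H2; by rewrite (flat_mem (mem_enum _ p) Hp).
Qed.


Lemma updE (X : eqType) (Y : Type) (f : X -> Y) a b x : upd f a b x = if x == a then b else f x.
Proof. by []. Qed.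

Lemma mmut_set_mut (m : Defs.mem Ty V n) T p w T' q :
  mmut (set_mut m T p w) T' q = if (T' == T) && (q == p) then w else mmut m T' q.
Proof. rewrite /set_mut /upd /=; case: eqP => [->|] //=; by case: (q == p). Qed.

Lemma mimm_set_mut (m : Defs.mem Ty V n) T p w : mimm (set_mut m T p w) = mimm m.
Proof. by []. Qed.

Lemma mimm_set_imm (m : Defs.mem Ty V n) T p k v T' q i :
  mimm (set_imm m T p k v) T' q i = if [&& T' == T, q == p & i == k] then v else mimm m T' q i.
Proof. rewrite /set_imm /upd /=; case: eqP => [->|] //=; case: eqP => [->|] //=. Qed.

Lemma mmut_set_imm (m : Defs.mem Ty V n) T p k v : mmut (set_imm m T p k v) = mmut m.
Proof. by []. Qed.

Definition ext (A : nat -> ast) N (S' : ast) t := if t <= N then A t else S'.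

Lemma ext_le A N S' t : t <= N -> ext A N S' t = A t.
Proof. by rewrite /ext => ->. Qed.
Lemma ext_gt A N S' t : N < t -> ext A N S' t = S'.
Proof. by move=> H; rewrite /ext leqNgt H. Qed.

Lemma rtime_lt h m A N p (l : lst) t : LI h m A N p l -> rtime l = Some t -> t < N.
Proof.
case: l => //=.
- by move=> T a b old t1 k [_ [[Ht _] _]] [<-].
- by move=> T a b old t1 k [_ [[Ht _] _]] [<-].
- by move=> T a b old t1 [_ [[Ht _] _]] [<-].
- by move=> T d f dv x t0 [_ [_ [Ht _]]] [<-].
Qed.

Lemma hist_lt c A x : InvA c A -> List.In x (chist c) -> x.1 < cclk c.
Proof. by move=> H /(iv_hist H) []. Qed.

Lemma hist_times_lt c A t : InvA c A -> t \in map fst (chist c) -> t < cclk c.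
Proof. move=> H /in_map_fstE [z [Hz <-]]; exact: hist_lt H Hz. Qed.

Lemma In_rcons (X : Type) (s : seq X) x y : List.In y (rcons s x) <-> List.In y s \/ y = x.
Proof. rewrite -cats1 In_cat /=; intuition. Qed.

Lemma times_ok c A p (l' : lst) h' S' :
  let N := cclk c in let A' := ext A N S' in
  let cl' := upd (cloc c) p l' in
  InvA c A ->
  (h' = chist c \/ exists x, h' = rcons (chist c) x /\ x.1 <= N /\
        x.1 \notin map fst (chist c) /\
        spec_step vdef (A' x.1) x.2.1.1 x.2.1.2 x.2.2 (A' x.1.+1) /\
        (x.1 = N \/ rtime (cloc c p) = Some x.1 /\ rtime l' = None)) ->
  (rtime l' = None \/ rtime l' = rtime (cloc c p) \/ (rtime l' = Some N /\ h' = chist c)) ->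
  (forall t, ptime (cloc c p) = Some t -> ptime l' = Some t \/ t \in map fst h') ->
  (N \in map fst h' \/ ptime l' = Some N \/ S' = A N) ->
  A' 0 = ainit Ty V n /\
      (forall t, N.+1 <= t -> A' t = A' N.+1) /\
      (forall t, t < N.+1 -> t \notin map fst h' ->
             (forall q, ptime (cl' q) <> Some t) -> A' t.+1 = A' t) /\
      (forall x, List.In x h' -> x.1 < N.+1 /\
             spec_step vdef (A' x.1) x.2.1.1 x.2.1.2 x.2.2 (A' x.1.+1)) /\
      uniq (map fst h') /\
      (forall q t, rtime (cl' q) = Some t -> t \notin map fst h') /\
      (forall q q' t, rtime (cl' q) = Some t -> rtime (cl' q') = Some t -> q = q').
Proof.
move=> N A' cl' H Hh Hr Hp HN.
have Hsub : forall t, t \in map fst (chist c) -> t \in map fst h'.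
  by move=> t; case: Hh => [->|[x [-> _]]] //; rewrite map_rcons -cats1 mem_cat => ->.
have Hrl : forall q t, rtime (cloc c q) = Some t -> t < N.
  by move=> q t; apply: rtime_lt (iv_li H q).
split; [|split; [|split; [|split; [|split; [|split]]]]].
- by rewrite /A' ext_le // (iv_init H).
- by move=> t Ht; rewrite /A' !ext_gt.
- move=> t; rewrite ltnS leq_eqVlt => /orP [/eqP ->|Ht] Hth Hpt.
    rewrite /A' ext_gt // ext_le //.
    case: HN => [HN|[HN|->]] //; first by rewrite HN in Hth.
    by have := Hpt p; rewrite /cl' updE eqxx HN.
  rewrite /A' !ext_le ?(ltnW Ht) //; apply: (iv_gap H) => //.
    by apply: contra Hth; apply: Hsub.
  move=> q Hq; case: (eqVneq q p) => [Eq|Nq].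
    subst q; case: (Hp _ Hq) => [Hl|Hm]; last by rewrite Hm in Hth.
    by have := Hpt p; rewrite /cl' updE eqxx Hl.
  by have := Hpt q; rewrite /cl' updE (negbTE Nq) Hq.
- move=> x; case: Hh => [->|[y [-> [Hy1 [_ [Hy2 _]]]]]].
    move=> Hx; have [Hl Hs] := iv_hist H Hx.
    by rewrite /A' !ext_le // ltnW.
  case/In_rcons => [Hx|->]; last by [].
  have [Hl Hs] := iv_hist H Hx.
  by rewrite /A' !ext_le // ltnW.
- case: Hh => [->|[x [-> [_ [Hx _]]]]]; first exact: (iv_uniq H).
  by rewrite map_rcons rcons_uniq Hx (iv_uniq H).
- move=> q t; rewrite /cl' updE; case: (eqVneq q p) => [_|Nq] Hq.
    case: Hr => [Hr|[Hr|[Hr Hh']]]; first by rewrite Hr in Hq.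
      rewrite Hr in Hq; have Ho := iv_rh H Hq.
      case: Hh => [->|[x [-> [_ [_ [_ Hx]]]]]] //.
      rewrite map_rcons -cats1 mem_cat negb_or Ho inE /=.
      case: Hx => [->|[_ Hl]]; first by rewrite neq_ltn (Hrl _ _ Hq).
      by rewrite -Hr Hl in Hq.
    rewrite Hr in Hq; case: Hq => <-; rewrite Hh'.
    by apply/negP => /(hist_times_lt H); rewrite ltnn.
  have Ho := iv_rh H Hq.
  case: Hh => [->|[x [-> [_ [_ [_ Hx]]]]]] //.
  rewrite map_rcons -cats1 mem_cat negb_or Ho inE /=.
  case: Hx => [->|[Hl _]]; first by rewrite neq_ltn (Hrl _ _ Hq).
  apply/eqP => E; subst t; move/eqP: Nq; apply; exact: (iv_rr H Hq Hl).
- have Hone : forall q t, q != p -> rtime l' = Some t -> rtime (cloc c q) = Some t -> False.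
    move=> q t Nq Hl Hq.
    case: Hr => [Hr|[Hr|[Hr _]]]; first by rewrite Hr in Hl.
      by move/eqP: Nq; apply; apply: (iv_rr H Hq); rewrite -Hr.
    by rewrite Hr in Hl; case: Hl => E; have := Hrl _ _ Hq; rewrite E ltnn.
  move=> q q' t; rewrite /cl' !updE.
  case: (eqVneq q p) => [E1|Nq]; case: (eqVneq q' p) => [E2|Nq'] H1 H2; first by rewrite E1 E2.
  + by case: (Hone _ _ Nq' H1 H2).
  + by case: (Hone _ _ Nq H2 H1).
  + exact: (iv_rr H H1 H2).
Qed.


Lemma CNok_frame A A' N N' p T a b old t1 :
  CNok A N p T a b old t1 -> N <= N' -> (forall t, t <= N -> A' t = A t) ->
  CNok A' N' p T a b old t1.
Proof.
move=> [Ht Hs] HN HA; split; first exact: leq_trans Ht HN.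
by rewrite !HA // ltnW.
Qed.

Lemma LI_frame h h' m m' A A' N N' p' (l : lst) :
  LI h m A N p' l ->
  (forall T d, returned h T d -> returned h' T d) ->
  N <= N' -> (forall t, t <= N -> A' t = A t) ->
  (forall T, sig m' T p' = sig m T p') ->
  (forall T, cnT l T <> None -> mimm m' T p' = mimm m T p' /\ mv m' T p' = mv m T p') ->
  (forall T q s, returned h T (q, s) -> sig m' T q = s -> sig m T q = s /\ mimm m' T q = mimm m T q) ->
  LI h' m' A' N' p' l.
Proof.
move=> HL Hret HN HA H1 H2 H3; case: l HL H2 => //=.
- by move=> T a b old [Hs ->]; rewrite H1.
- move=> T a b old t1 k [Hs [Hc Hi]] H2; have [Hm _] : mimm m' T p' = mimm m T p' /\ mv m' T p' = mv m T p' by apply: H2; rewrite eqxx.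
  by split => //; split; [exact: CNok_frame Hc HN HA | move=> i Hik; rewrite Hm; exact: Hi].
- move=> T a b old t1 k [Hs [Hc [Hi Hj]]] H2; have [Hm Hv] : mimm m' T p' = mimm m T p' /\ mv m' T p' = mv m T p' by apply: H2; rewrite eqxx.
  by split => //; split; [exact: CNok_frame Hc HN HA | rewrite Hm Hv].
- move=> T a b old t1 [Hs [Hc [Hi Hj]]] H2; have [Hm Hv] : mimm m' T p' = mimm m T p' /\ mv m' T p' = mv m T p' by apply: H2; rewrite eqxx.
  by split => //; split; [exact: CNok_frame Hc HN HA | rewrite Hm Hv].
- by move=> T d f dv [Hr Hf]; split => //; apply: Hret.
- move=> T [q s] f dv x t0 [Hr [Hf [Ht Hv]]] _; split; first exact: Hret.
  split => //; split; first exact: leq_trans Ht HN.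
  move=> /= Hsig; have [Hs _] := H3 _ _ _ Hr Hsig.
  by rewrite HA ?(ltnW Ht) //; apply: Hv.
- move=> T [q s] k acc [Hr [Hk [Hsz Hv]]] _; split; first exact: Hret.
  do 2 split => //; move=> /= Hsig; have [Hs Hm] := H3 _ _ _ Hr Hsig.
  by rewrite Hm; apply: Hv.
- by move=> T d j v [Hr Hj]; split => //; apply: Hret.
- by move=> T d j v w [Hr Hj] _; split => //; apply: Hret.
- by move=> T d j e w [Hr Hj] _; split => //; apply: Hret.
- by move=> T d j e w x [Hr Hj] _; split => //; apply: Hret.
Qed.

Lemma acur_fst m S cl : (forall T q, MR m S cl T q) ->
  forall T q d, acur S T q = Some d -> d.1 = q.
Proof.
move=> H T q d; have [_ Hm] := H T q; move: Hm.
case: (cnT (cl q) T) => [[[a b] old]|]; first by move=> [_ [-> _]] [<-].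
by case=> [[_ ->]|[_ [-> _]]] // [<-].
Qed.

Lemma avalid_iff m S cl T q s : (forall T q, MR m S cl T q) ->
  avalid S T (q, s) <-> acur S T q = Some (q, s).
Proof.
move=> H; split; last by exists q.
by case=> p Hp; have E := acur_fst H Hp; simpl in E; subst p.
Qed.

Lemma valid_sig m S cl T q s : (forall T q, MR m S cl T q) ->
  0 < s <= sdone cl m T q -> sig m T q = s ->
  [/\ cnT (cl q) T = None, avalid S T (q, s) & goodc (acont S T (q, s)) m T q].
Proof.
move=> H /andP [Hs0 Hsd] Hsig; have [_ Hm] := H T q.
move: Hsd Hm; rewrite /sdone; case: (cnT (cl q) T) => [[[a b] old]|] Hsd.
  by move=> [Hso _]; move: Hsd; rewrite -Hsig Hso ltnn.
case=> [[Hz _]|[_ [Hc Hg]]]; first by move: Hs0; rewrite -Hsig Hz.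
by split => //; [apply/(avalid_iff _ _ _ H); rewrite Hc Hsig | rewrite -Hsig].
Qed.

Lemma invalid_sig m S cl T q s : (forall T q, MR m S cl T q) ->
  0 < s <= sdone cl m T q -> sig m T q <> s -> ~ avalid S T (q, s).
Proof.
move=> H /andP [Hs0 Hsd] Hsig /(avalid_iff _ _ _ H) Hc; have [_ Hm] := H T q.
move: Hsd Hm; rewrite /sdone; case: (cnT (cl q) T) => [[[a b] old]|] Hsd.
  move=> [_ [Hc' _]]; move: Hc; rewrite Hc' => -[E]; move: Hsd; rewrite -E.
  by rewrite ltnNge leqnSn.
case=> [[_ Hz]|[_ [Hc' _]]]; first by rewrite Hz in Hc.
by move: Hc; rewrite Hc' => -[E].
Qed.

Lemma returned_rcons (h : seq (hentry Ty V n)) x T d : returned h T d -> returned (rcons h x) T d.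
Proof. by case=> t [p [a [b H]]]; exists t, p, a, b; apply/In_rcons; left. Qed.

Lemma returned_rconsE (h : seq (hentry Ty V n)) x T d : returned (rcons h x) T d ->
  returned h T d \/ exists t p a b, x = (t, (p, OCreate n T a b, RPtr V d)).
Proof.
case=> t [p [a [b /In_rcons [H|H]]]]; first by left; exists t, p, a, b.
by right; exists t, p, a, b.
Qed.

Lemma init_inv : InvA (init_config init_imm init_mut) (fun _ => ainit Ty V n).
Proof.
split => //=.
- move=> T q; split; first by rewrite /mv /= Hinit.
  by left.
- by move=> T q s [t [p [a [b []]]]].
Qed.


Lemma assemble c A p (l' : lst) m' h' S' :
  let N := cclk c in let A' := ext A N S' in
  let cl' := upd (cloc c) p l' in
  InvA c A ->
  (h' = chist c \/ exists x, h' = rcons (chist c) x /\ x.1 <= N /\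
        x.1 \notin map fst (chist c) /\
        spec_step vdef (A' x.1) x.2.1.1 x.2.1.2 x.2.2 (A' x.1.+1) /\
        (x.1 = N \/ rtime (cloc c p) = Some x.1 /\ rtime l' = None)) ->
  (rtime l' = None \/ rtime l' = rtime (cloc c p) \/ (rtime l' = Some N /\ h' = chist c)) ->
  (forall t, ptime (cloc c p) = Some t -> ptime l' = Some t \/ t \in map fst h') ->
  (N \in map fst h' \/ ptime l' = Some N \/ S' = A N) ->
  (forall T q, MR m' S' cl' T q) -> CB S' m' cl' -> RB h' m' cl' ->
  (forall q, LI h' m' A' N.+1 q (cl' q)) ->
  InvA (Config m' cl' N.+1 h') A'.
Proof.
move=> N A' cl' H Hh Hr Hp HN Hmr Hcb Hrb Hli.
have [H1 [H2 [H3 [H4 [H5 [H6 H7]]]]]] := times_ok H Hh Hr Hp HN.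
have ES : A' N.+1 = S' by rewrite /A' ext_gt.
by split => //=; rewrite ES.
Qed.

Definition mframe (h : seq (hentry Ty V n)) (m m' : Defs.mem Ty V n) (cl : 'I_n -> lst) p :=
  forall q, q != p ->
  (forall T, sig m' T q = sig m T q) /\
  (forall T, cnT (cl q) T <> None -> mimm m' T q = mimm m T q /\ mv m' T q = mv m T q) /\
  (forall T q0 s, returned h T (q0, s) -> sig m' T q0 = s -> sig m T q0 = s /\ mimm m' T q0 = mimm m T q0).

Lemma mframe_same h m cl p : mframe h m m cl p.
Proof. by []. Qed.

Lemma LI_all c A p (l' : lst) m' h' S' :
  InvA c A -> mframe (chist c) (cmem c) m' (cloc c) p ->
  (forall T d, returned (chist c) T d -> returned h' T d) ->
  LI h' m' (ext A (cclk c) S') (cclk c).+1 p l' ->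
  forall q, LI h' m' (ext A (cclk c) S') (cclk c).+1 q (upd (cloc c) p l' q).
Proof.
move=> H Hf Hret Hown q; rewrite updE; case: (eqVneq q p) => [->|Nq] //.
have [F1 [F2 F3]] := Hf q Nq.
apply: LI_frame (iv_li H q) Hret _ _ F1 F2 F3 => // t Ht; exact: ext_le.
Qed.

Definition cn_same (l l' : lst) := forall T, cnT l' T = cnT l T.

Lemma cn_same_upd (cl : 'I_n -> lst) p l' : cn_same (cl p) l' ->
  forall q T, cnT (upd cl p l' q) T = cnT (cl q) T.
Proof. by move=> H q T; rewrite updE; case: (eqVneq q p) => [->|]. Qed.

Lemma MR_same m S cl cl' : (forall q T, cnT (cl' q) T = cnT (cl q) T) ->
  forall T q, MR m S cl T q -> MR m S cl' T q.
Proof. by move=> H T q; rewrite /MR H. Qed.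

Lemma CB_same S m cl cl' : (forall q T, cnT (cl' q) T = cnT (cl q) T) ->
  CB S m cl -> CB S m cl'.
Proof. by move=> H Hc T q s; rewrite /target H; apply: Hc. Qed.

Lemma RB_same (h h' : seq (hentry Ty V n)) m cl cl' : (forall q T, cnT (cl' q) T = cnT (cl q) T) ->
  (forall T d, returned h' T d -> returned h T d) -> RB h m cl -> RB h' m cl'.
Proof. by move=> H Hr Hc T q s /Hr; rewrite /sdone H; apply: Hc. Qed.

Lemma simple_step c A p (l' : lst) :
  InvA c A -> cn_same (cloc c p) l' -> ptime l' = ptime (cloc c p) ->
  (rtime l' = None \/ rtime l' = rtime (cloc c p) \/ rtime l' = Some (cclk c)) ->
  LI (chist c) (cmem c) (ext A (cclk c) (A (cclk c))) (cclk c).+1 p l' ->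
  exists A', InvA (Config (cmem c) (upd (cloc c) p l') (cclk c).+1 (chist c)) A'.
Proof.
move=> H Hcn Hpt Hrt Hli; exists (ext A (cclk c) (A (cclk c))).
have Hcu := cn_same_upd Hcn.
apply: assemble => //.
- by left.
- by case: Hrt => [|[|]]; auto.
- by move=> t; rewrite Hpt; left.
- by right; right.
- by move=> T q; apply: MR_same Hcu _ _ (iv_mr H T q).
- exact: CB_same Hcu (iv_cb H).
- exact: RB_same Hcu _ (iv_rb H).
- exact: LI_all H (@mframe_same _ _ _ _) _ Hli.
Qed.

Lemma return_step c A p o r :
  InvA c A -> cnT (cloc c p) =1 (fun _ => None) -> ptime (cloc c p) = None ->
  (forall T a b, o <> OCreate n T a b) ->
  spec_step vdef (A (cclk c)) p o r (A (cclk c)) ->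
  exists A', InvA (Config (cmem c) (upd (cloc c) p (LIdle Ty V n)) (cclk c).+1
                          (rcons (chist c) (cclk c, (p, o, r)))) A'.
Proof.
move=> H Hcn Hpt Ho Hs; exists (ext A (cclk c) (A (cclk c))).
have Hcs : cn_same (cloc c p) (LIdle Ty V n) by move=> T; rewrite Hcn.
have Hcu := cn_same_upd Hcs.
have Hret : forall T d, returned (rcons (chist c) (cclk c, (p, o, r))) T d -> returned (chist c) T d.
  by move=> T d /returned_rconsE [//|[t [q [a [b [_ _ Eo _]]]]]]; case: (Ho _ _ _ Eo).
apply: assemble => //.
- right; exists (cclk c, (p, o, r)); split => //; split => //; split.
    by apply/negP => /(hist_times_lt H); rewrite ltnn.
  by rewrite /= (ext_gt _ _ (ltnSn _)) ext_le //; split => //; left.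
- by left.
- by move=> t; rewrite Hpt.
- by left; rewrite map_rcons -cats1 mem_cat inE eqxx orbT.
- by move=> T q; apply: MR_same Hcu _ _ (iv_mr H T q).
- exact: CB_same Hcu (iv_cb H).
- exact: RB_same Hcu Hret (iv_rb H).
- by apply: LI_all H (@mframe_same _ _ _ _) _ _ => // T d; apply: returned_rcons.
Qed.


Definition mkC (S : ast) T p (d : ptr n) a b : ast :=
  AState (upd (acreated S) T (upd (acreated S T) d true))
         (upd (acont S) T (upd (acont S T) d (a, b)))
         (upd (acur S) T (upd (acur S T) p (Some d))).

Lemma acur_mkC S T p d a b T' q :
  acur (mkC S T p d a b) T' q = if (T' == T) && (q == p) then Some d else acur S T' q.
Proof. rewrite /mkC /upd /=; case: (eqVneq T' T) => [->|Hne] //=. Qed.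
Lemma acont_mkC S T p d a b T' d' :
  acont (mkC S T p d a b) T' d' = if (T' == T) && (d' == d) then (a, b) else acont S T' d'.
Proof. rewrite /mkC /upd /=; case: (eqVneq T' T) => [->|Hne] //=. Qed.
Lemma acreated_mkC S T p d a b T' d' :
  acreated (mkC S T p d a b) T' d' = if (T' == T) && (d' == d) then true else acreated S T' d'.
Proof. rewrite /mkC /upd /=; case: (eqVneq T' T) => [->|Hne] //=. Qed.

Lemma acur_aset (S : ast) T d j v : acur (aset_mut vdef S T d j v) = acur S.
Proof. by []. Qed.
Lemma acreated_aset (S : ast) T d j v : acreated (aset_mut vdef S T d j v) = acreated S.
Proof. by []. Qed.
Lemma acont_aset (S : ast) T d j v T' d' :
  acont (aset_mut vdef S T d j v) T' d' =
  if (T' == T) && (d' == d) then ((acont S T d).1, set_nth vdef (acont S T d).2 j v)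
  else acont S T' d'.
Proof. rewrite /aset_mut /upd /=; case: (eqVneq T' T) => [->|Hne] //=. Qed.

Lemma MR_pt m m' S S' cl cl' T q :
  MR m S cl T q -> cnT (cl' q) T = cnT (cl q) T -> mmut m' T q = mmut m T q ->
  (cnT (cl q) T = None -> mimm m' T q = mimm m T q) -> acur S' T q = acur S T q ->
  (forall s, acont S' T (q, s) = acont S T (q, s)) -> MR m' S' cl' T q.
Proof.
move=> + Hc Hm Hi Ha Ho; rewrite /MR /goodc /sig /mv Hc Hm Ha.
by case: (cnT (cl q) T) Hi => [[[a b] old]|] Hi; rewrite ?Ho ?Hi.
Qed.

Lemma returned_sd c A T q s : InvA c A -> returned (chist c) T (q, s) ->
  0 < s <= sdone (cloc c) (cmem c) T q.
Proof. by move=> H /(iv_rb H). Qed.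

Lemma size_set_nth_lt (s : seq V) j v : j < size s -> size (set_nth vdef s j v) = size s.
Proof. by move=> Hj; rewrite size_set_nth; apply/maxn_idPr. Qed.


Lemma mimm_set_imm_o (m : Defs.mem Ty V n) T p k v T' q :
  (T' != T) || (q != p) -> mimm (set_imm m T p k v) T' q = mimm m T' q.
Proof.
rewrite /set_imm /upd /=; case: (eqVneq T' T) => [->|Hne] //= Hq.
by rewrite (negbTE Hq).
Qed.

Lemma mmut_set_mut_o (m : Defs.mem Ty V n) T p w T' q :
  (T' != T) || (q != p) -> mmut (set_mut m T p w) T' q = mmut m T' q.
Proof. by rewrite mmut_set_mut; case: (T' == T); case: (q == p). Qed.

Lemma CB_eq S m m' cl cl' : (forall T q, target cl' m' T q = target cl m T q) ->
  CB S m cl -> CB S m' cl'.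
Proof. by move=> H Hc T q s; rewrite H; apply: Hc. Qed.

Lemma RB_eq (h h' : seq (hentry Ty V n)) m m' cl cl' :
  (forall T q, sdone cl' m' T q = sdone cl m T q) ->
  (forall T d, returned h' T d -> returned h T d) -> RB h m cl -> RB h' m' cl'.
Proof. by move=> H Hr Hc T q s /Hr; rewrite H; apply: Hc. Qed.

Lemma mem_simple_step c A p (l' : lst) m' :
  InvA c A -> cn_same (cloc c p) l' -> ptime l' = ptime (cloc c p) ->
  rtime l' = rtime (cloc c p) ->
  (forall T q, sig m' T q = sig (cmem c) T q) ->
  (forall T q, MR m' (A (cclk c)) (upd (cloc c) p l') T q) ->
  mframe (chist c) (cmem c) m' (cloc c) p ->
  LI (chist c) m' (ext A (cclk c) (A (cclk c))) (cclk c).+1 p l' ->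
  exists A', InvA (Config m' (upd (cloc c) p l') (cclk c).+1 (chist c)) A'.
Proof.
move=> H Hcn Hpt Hrt Hsig Hmr Hf Hli; exists (ext A (cclk c) (A (cclk c))).
have Hcu := cn_same_upd Hcn.
apply: assemble => //.
- by left.
- by right; left.
- by move=> t; rewrite Hpt; left.
- by right; right.
- apply: CB_eq (iv_cb H) => T q; by rewrite /target Hcu Hsig.
- apply: RB_eq _ _ (iv_rb H) => // T q; by rewrite /sdone Hcu Hsig.
- exact: LI_all H Hf _ Hli.
Qed.

Lemma case_CNimm c A p T a b old t1 k :
  InvA c A -> cloc c p = LCNimm n T a b old t1 k -> k < nimm T ->
  exists A', InvA (Config (set_imm (cmem c) T p k (nth vdef a k))
                          (upd (cloc c) p (LCNimm n T a b old t1 k.+1)) (cclk c).+1 (chist c)) A'.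
Proof.
move=> H Hl Hk; have := iv_li H p; rewrite Hl => -[Hsz [Hok Hi]].
have := iv_mr H T p; rewrite /MR Hl /= eqxx => -[_ [Hsg _]].
have Hcs : cn_same (cloc c p) (LCNimm n T a b old t1 k.+1) by rewrite Hl.
apply: (mem_simple_step H) => //; first by rewrite Hl.
- by rewrite Hl.
- move=> T' q; case: (boolP ((T' != T) || (q != p))) => Ho.
    apply: MR_pt (iv_mr H T' q) _ _ _ _ _ => //; first exact: (cn_same_upd Hcs).
    by move=> _; rewrite mimm_set_imm_o.
  move: Ho; rewrite negb_or !negbK => /andP [/eqP -> /eqP ->].
  by move: (iv_mr H T p); rewrite /MR updE eqxx Hl /= eqxx.
- move=> q Nq; split => //; split.
    by move=> T' _; rewrite mimm_set_imm_o // Nq orbT.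
  move=> T' q0 s Hr Hs; split => //.
  case: (boolP ((T' != T) || (q0 != p))) => Ho; first by rewrite mimm_set_imm_o.
  move: Ho Hs Hr; rewrite negb_or !negbK => /andP [/eqP -> /eqP ->] Hs /(iv_rb H).
  have Hs2 : sig (cmem c) T p = s by rewrite -Hs. 
  by rewrite /sdone Hl /= eqxx -Hs2 Hsg => /andP [_]; rewrite ltnn.
- split => //; split; first exact: CNok_frame Hok (leqnSn _) (fun t Ht => ext_le _ _ Ht).
  move=> i; rewrite ltnS leq_eqVlt => /orP [/eqP ->|Hik].
    by rewrite mimm_set_imm /= !eqxx.
  rewrite mimm_set_imm /= !eqxx /=; case: eqP => [E|_]; last exact: Hi.
  by move: Hik; rewrite E ltnn.
Qed.


Lemma case_CNmut c A p T a b old t1 k :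
  InvA c A -> cloc c p = LCNmut n T a b old t1 k -> k < nmut T ->
  exists A', InvA (Config (set_mut (cmem c) T p ((mmut (cmem c) T p).1,
                              set_nth vdef (mmut (cmem c) T p).2 k (nth vdef b k)))
                          (upd (cloc c) p (LCNmut n T a b old t1 k.+1)) (cclk c).+1 (chist c)) A'.
Proof.
move=> H Hl Hk; have := iv_li H p; rewrite Hl => -[Hsz [Hok [Hi Hj]]].
have := iv_mr H T p; rewrite /MR Hl /= eqxx => -[Hsize [Hsg _]].
have Hcs : cn_same (cloc c p) (LCNmut n T a b old t1 k.+1) by rewrite Hl.
set m' := set_mut _ _ _ _.
have Hsig : forall T' q, sig m' T' q = sig (cmem c) T' q.
  by move=> T' q; rewrite /sig /m' mmut_set_mut; case: ifP => // /andP [/eqP -> /eqP ->].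
have Hmv : mv m' T p = set_nth vdef (mv (cmem c) T p) k (nth vdef b k).
  by rewrite /mv /m' mmut_set_mut !eqxx.
have Hkk : k < size (mv (cmem c) T p) by rewrite Hsize.
apply: (mem_simple_step H) => //; first by rewrite Hl.
- by rewrite Hl.
- move=> T' q; case: (boolP ((T' != T) || (q != p))) => Ho.
    apply: MR_pt (iv_mr H T' q) _ _ _ _ _ => //; first exact: (cn_same_upd Hcs).
    by rewrite /m' mmut_set_mut_o.
  move: Ho; rewrite negb_or !negbK => /andP [/eqP -> /eqP ->].
  move: (iv_mr H T p); rewrite /MR updE eqxx Hl /= eqxx Hmv size_set_nth_lt //.
  by rewrite Hsig.
- move=> q Nq; split => //; split.
    by move=> T' _; split => //; rewrite /mv /m' mmut_set_mut_o // Nq orbT.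
  by move=> T' q0 s Hr; rewrite Hsig.
- split => //; split; first exact: CNok_frame Hok (leqnSn _) (fun t Ht => ext_le _ _ Ht).
  split => // i; rewrite Hmv nth_set_nth /= ltnS leq_eqVlt => /orP [/eqP ->|Hik].
    by rewrite eqxx.
  case: eqP => [E|_]; last exact: Hj.
  by move: Hik; rewrite E ltnn.
Qed.

Lemma case_CN1 c A p T a b old :
  InvA c A -> cloc c p = LCN1 n T a b old ->
  exists A', InvA (Config (set_mut (cmem c) T p (old.+1, (mmut (cmem c) T p).2))
                          (upd (cloc c) p (LCNimm n T a b old (cclk c) 0)) (cclk c).+1 (chist c)) A'.
Proof.
move=> H Hl; have := iv_li H p; rewrite Hl => -[Hsz Hold].
set N := cclk c; set S' := mkC (A N) T p (p, old.+2) a b.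
set m' := set_mut _ _ _ _; set l' := LCNimm n T a b old N 0.
have Hnc : ~~ acreated (A N) T (p, old.+2).
  apply/negP => /(iv_cb H); rewrite /target Hl /= -Hold.
  by rewrite ltnNge leqnSn.
have Hsp : spec_step vdef (A N) p (OCreate n T a b) (RPtr V (p, old.+2)) S'.
  exact: SCreate.
have Hcn : forall T' q, ~~ ((T' == T) && (q == p)) -> cnT (upd (cloc c) p l' q) T' = cnT (cloc c q) T'.
  move=> T' q; rewrite updE; case: (eqVneq q p) => [->|] //; rewrite andbT Hl /= => HT.
  by rewrite eq_sym (negbTE HT).
have Hsg : forall T' q, ~~ ((T' == T) && (q == p)) -> mmut m' T' q = mmut (cmem c) T' q.
  by move=> T' q; rewrite /m' mmut_set_mut => /negbTE ->.
exists (ext A N S'); apply: assemble => //.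
- by left.
- by right; right; split.
- by move=> t; rewrite Hl.
- by right; left.
- move=> T' q; case: (boolP ((T' == T) && (q == p))) => Ho; last first.
    apply: MR_pt (iv_mr H T' q) _ _ _ _ _ => //; try by [apply: Hcn | apply: Hsg].
      by rewrite /S' acur_mkC (negbTE Ho).
    move=> s; rewrite /S' acont_mkC; case: (T' == T) Ho => //= Ho.
    by rewrite xpair_eqE (negbTE Ho).
  case/andP: Ho => /eqP -> /eqP ->.
  have [Hsize _] := iv_mr H T p.
  rewrite /MR updE eqxx /l' /= eqxx /mv /sig /m' mmut_set_mut !eqxx /= !updE !eqxx.
  by rewrite !updE !eqxx; split.
- move=> T' q s; rewrite /S' acreated_mkC.
  case: (boolP ((T' == T) && ((q, s) == (p, old.+2)))) => Ho.
    case/andP: Ho => /eqP -> /eqP [-> ->] _.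
    by rewrite /target updE eqxx /l' /= eqxx.
  move=> /(iv_cb H); rewrite /target.
  case: (boolP ((T' == T) && (q == p))) => Htp.
    case/andP: Htp => /eqP -> /eqP ->; rewrite updE eqxx Hl /l' /= eqxx -Hold.
    by move=> Hs; apply: leq_trans Hs (leq_trans (leqnSn _) (leqnSn _)).
  by rewrite Hcn // /sig Hsg.
- move=> T' q s /(iv_rb H); rewrite /sdone.
  case: (boolP ((T' == T) && (q == p))) => Htp.
    by case/andP: Htp => /eqP -> /eqP ->; rewrite updE eqxx Hl /l' /= eqxx -Hold.
  by rewrite Hcn // /sig Hsg.
- apply: (LI_all H) => //.
  + move=> q Nq; split; last split.
    * by move=> T'; rewrite /sig Hsg // (negbTE Nq) andbF.
    * by move=> T' _; rewrite /mv Hsg // (negbTE Nq) andbF.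
    * move=> T' q0 s Hr Hs; split => //.
      case: (boolP ((T' == T) && (q0 == p))) => Htp; last by rewrite -Hs /sig Hsg.
      move: Htp Hs Hr => /andP [/eqP -> /eqP ->] Hs /(iv_rb H).
      rewrite /sdone Hl /= -Hold -Hs /sig /m' mmut_set_mut !eqxx /=.
      by rewrite ltnn.
  + split => //; split => //; split; first exact: ltnSn.
    by rewrite ext_le // ext_gt.
Qed.


Lemma case_CN2 c A p T a b old t1 :
  InvA c A -> cloc c p = LCN2 n T a b old t1 ->
  exists A', InvA (Config (set_mut (cmem c) T p (old.+2, (mmut (cmem c) T p).2))
     (upd (cloc c) p (LIdle Ty V n)) (cclk c).+1
     (rcons (chist c) (t1, (p, OCreate n T a b, RPtr V (p, old.+2))))) A'.
Proof.
move=> H Hl; have := iv_li H p; rewrite Hl => -[Hsz [[Ht1 Hsp] [Hi Hmv]]].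
have := iv_mr H T p; rewrite /MR Hl /= eqxx => -[Hsize [Hsg [Hcur Hcont]]].
set N := cclk c; set m' := set_mut _ _ _ _; set l' := LIdle Ty V n.
set x := (t1, _); set h' := rcons _ x.
have Hcn : forall T' q, ~~ ((T' == T) && (q == p)) -> cnT (upd (cloc c) p l' q) T' = cnT (cloc c q) T'.
  move=> T' q; rewrite updE; case: (eqVneq q p) => [->|] //; rewrite andbT Hl /= => HT.
  by rewrite eq_sym (negbTE HT).
have Hsg' : forall T' q, ~~ ((T' == T) && (q == p)) -> mmut m' T' q = mmut (cmem c) T' q.
  by move=> T' q; rewrite /m' mmut_set_mut => /negbTE ->.
have Hsd : forall T' q, sdone (cloc c) (cmem c) T' q <= sdone (upd (cloc c) p l') m' T' q.
  move=> T' q; rewrite /sdone.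
  case: (boolP ((T' == T) && (q == p))) => Htp; last by rewrite Hcn // /sig Hsg'.
  case/andP: Htp => /eqP -> /eqP ->; rewrite updE eqxx Hl /= eqxx /sig /m' mmut_set_mut !eqxx /=.
  exact: leq_trans (leqnSn _) (leqnSn _).
have Hrl : rtime (cloc c p) = Some t1 by rewrite Hl.
exists (ext A N (A N)); apply: assemble => //.
- right; exists x; split => //; split; first exact: ltnW.
  split; first exact: (iv_rh H Hrl).
  split; first by rewrite /= !ext_le // ltnW.
  by right.
- by left.
- by move=> t; rewrite Hl => -[<-]; right; rewrite /h' map_rcons -cats1 mem_cat inE eqxx orbT.
- by right; right.
- move=> T' q; case: (boolP ((T' == T) && (q == p))) => Ho; last first.
    by apply: MR_pt (iv_mr H T' q) _ _ _ _ _ => //; [apply: Hcn | apply: Hsg'].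
  case/andP: Ho => /eqP -> /eqP ->.
  rewrite /MR updE eqxx /l' /= /mv /sig /m' mmut_set_mut !eqxx /=; split; first by [].
  right; split => //; split => //; rewrite Hcont /goodc /=; split; first by case: Hsz.
  split; last by rewrite /mv /m' mmut_set_mut !eqxx. by move=> i Hi'; rewrite Hi.
- apply: CB_eq (iv_cb H) => T' q; rewrite /target.
  case: (boolP ((T' == T) && (q == p))) => Htp; last by rewrite Hcn // /sig Hsg'.
  case/andP: Htp => /eqP -> /eqP ->; rewrite updE eqxx Hl /= eqxx /sig /m' mmut_set_mut !eqxx.
  by [].
- move=> T' q s /returned_rconsE [/(iv_rb H) /andP [Hs0 Hs]|].
    by rewrite Hs0 /=; apply: leq_trans Hs (Hsd _ _).
  move=> [t [q' [a' [b' Ex]]]]; move: Ex; rewrite /x => -[_ _ <- _ _ <- <-].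
  rewrite /sdone updE eqxx /l' /= /sig /m' mmut_set_mut !eqxx /=.
  by [].
- apply: (LI_all H) => //.
  + move=> q Nq; split; last split.
    * by move=> T'; rewrite /sig Hsg' // (negbTE Nq) andbF.
    * by move=> T' _; rewrite /mv Hsg' // (negbTE Nq) andbF.
    * move=> T' q0 s Hr Hs; split => //.
      case: (boolP ((T' == T) && (q0 == p))) => Htp; last by rewrite -Hs /sig Hsg'.
      move: Htp Hs Hr => /andP [/eqP -> /eqP ->] Hs /(iv_rb H).
      rewrite /sdone Hl /= eqxx -Hs /sig /m' mmut_set_mut !eqxx /=.
      by move=> /ltnW; rewrite ltnn.

  + by move=> T' d; apply: returned_rcons.
Qed.


Lemma mut_step c A p T q s j v o r :
  InvA c A -> cnT (cloc c p) =1 (fun _ => None) -> ptime (cloc c p) = None ->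
  (forall T a b, o <> OCreate n T a b) ->
  returned (chist c) T (q, s) -> j < nmut T -> sig (cmem c) T q = s ->
  spec_step vdef (A (cclk c)) p o r (aset_mut vdef (A (cclk c)) T (q, s) j v) ->
  exists A', InvA (Config (set_mut (cmem c) T q ((mmut (cmem c) T q).1,
                                set_nth vdef (mmut (cmem c) T q).2 j v))
     (upd (cloc c) p (LIdle Ty V n)) (cclk c).+1 (rcons (chist c) (cclk c, (p, o, r)))) A'.
Proof.
move=> H Hcnp Hpt Ho Hret Hj Hsig Hsp.
have [Hcnq Hval Hgood] := valid_sig (iv_mr H) (iv_rb H Hret) Hsig.
have Hs0 : 0 < s by case/andP: (iv_rb H Hret).
set N := cclk c; pose S' := aset_mut vdef (A N) T (q, s) j v.
set m' := set_mut _ _ _ _; set l' := LIdle Ty V n.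
have Hcs : cn_same (cloc c p) l' by move=> T'; rewrite Hcnp.
have Hcu := cn_same_upd Hcs.
have Hsg : forall T' q', sig m' T' q' = sig (cmem c) T' q'.
  move=> T' q'; rewrite /sig /m' mmut_set_mut; case: ifP => // /andP [/eqP -> /eqP ->].
  by [].
have Hmo : forall T' q', ~~ ((T' == T) && (q' == q)) -> mmut m' T' q' = mmut (cmem c) T' q'.
  by move=> T' q'; rewrite /m' mmut_set_mut => /negbTE ->.
have Hret' : forall T' d, returned (rcons (chist c) (N, (p, o, r))) T' d -> returned (chist c) T' d.
  by move=> T' d /returned_rconsE [//|[t [q' [a [b [_ _ Eo _]]]]]]; case: (Ho _ _ _ Eo).
exists (ext A N S'); apply: assemble => //.
- right; exists (N, (p, o, r)); split => //; split => //; split.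
    by apply/negP => /(hist_times_lt H); rewrite ltnn.
  by rewrite /= (ext_gt _ _ (ltnSn _)) ext_le //; split => //; left.
- by left.
- by move=> t; rewrite Hpt.
- by left; rewrite map_rcons -cats1 mem_cat inE eqxx orbT.
- move=> T' q'; case: (boolP ((T' == T) && (q' == q))) => Htq; last first.
    apply: MR_pt (iv_mr H T' q') _ _ _ _ _ => //; first exact: Hmo.

    move=> s'; rewrite /S' acont_aset; case: (T' == T) Htq => //= Htq.
    by rewrite xpair_eqE (negbTE Htq).
  case/andP: Htq => /eqP -> /eqP ->.
  have [Hsize Hm] := iv_mr H T q; move: Hm; rewrite Hcnq.
  case=> [[Hz _]|[_ [Hcur _]]]; first by move: Hs0; rewrite -Hsig Hz.
  rewrite /MR Hcu Hcnq Hsg Hsig; split.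
    by rewrite /mv /m' mmut_set_mut !eqxx /= size_set_nth_lt // -/(mv _ T q) Hsize.
  right; split => //; split; first by rewrite /S' acur_aset Hcur Hsig.
  move: Hgood; rewrite /goodc /S' acont_aset !eqxx /= => -[G1 [G2 G3]].
  by split => //; split => //; rewrite /mv /m' mmut_set_mut !eqxx /= G3.
- apply: CB_eq (iv_cb H) => T' q'; by rewrite /target Hcu Hsg.
- apply: RB_eq _ Hret' (iv_rb H) => T' q'; by rewrite /sdone Hcu Hsg.
- apply: (LI_all H) => //.
  + move=> q' Nq; split => //; split => //.
    move=> T' Hc; split => //.
    rewrite /mv Hmo //; apply/negP => /andP [/eqP E1 /eqP E2].
    by move: Hc; rewrite E1 E2 Hcnq.
    by move=> T' q0 s0 _; rewrite Hsg.
  + by move=> T' d; apply: returned_rcons.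
Qed.


Lemma ext_same A N t : ext A N (A N) t = if t <= N then A t else A N.
Proof. by []. Qed.



Lemma case_RF1_valid c A p T q s f dv x t0 :
  InvA c A -> cloc c p = LRF1 T (q, s) f dv x t0 -> sig (cmem c) T q = s ->
  exists A', InvA (Config (cmem c) (upd (cloc c) p (LIdle Ty V n)) (cclk c).+1
      (rcons (chist c) (t0, (p, ORead T (q, s) f dv, RVal n x)))) A'.
Proof.
move=> H Hl Hsig; have := iv_li H p; rewrite Hl => -[Hr [Hf [Ht0 Hv]]].
have [Hval Hx] := Hv Hsig.
have Hrl : rtime (cloc c p) = Some t0 by rewrite Hl.
have Hgap : A t0.+1 = A t0.
  apply: (iv_gap H) => //; first exact: (iv_rh H Hrl).
  move=> p' Hp'; case: (eqVneq p' p) => [E|Np]; first by move: Hp'; rewrite E Hl.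
  by move/eqP: Np; apply; exact: (iv_rr H (ptime_rtime Hp') Hrl).
set N := cclk c; set l' := LIdle Ty V n.
have Hcs : cn_same (cloc c p) l' by move=> T'; rewrite Hl.
have Hcu := cn_same_upd Hcs.
exists (ext A N (A N)); apply: assemble => //.
- right; eexists; split; first reflexivity.
  split; first exact: ltnW.
  split; first exact: (iv_rh H Hrl).
  split; last by right.
  rewrite /= !ext_le ?(ltnW Ht0) // Hgap -Hx.
  exact: SReadValid.
- by left.
- by move=> t; rewrite Hl.
- by right; right.
- by move=> T' q'; apply: MR_same Hcu _ _ (iv_mr H T' q').
- exact: CB_same Hcu (iv_cb H).
- apply: RB_same Hcu _ (iv_rb H).
  by move=> T' d /returned_rconsE [//|[? [? [? [? []]]]]].
- by apply: LI_all H (@mframe_same _ _ _ _) _ _ => // T' d; apply: returned_rcons.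
Qed.

Lemma step_inv c c' A : InvA c A -> step nimm nmut vdef c c' -> exists A', InvA c' A'.
Proof.
move=> H Hs; destruct Hs as [c p m' l' e Hp].
move El: (cloc c p) => l in Hp; case: Hp El.
-
  move=> o Hw El; apply: (simple_step H).
  + by rewrite El; case: o Hw.
  + by rewrite El; case: o Hw.
  + by left; case: o Hw.
  + case: o Hw => /= [T a b|T d f dv|T d|T d j v|T d j e0 w] Hw //.
    by case: Hw => H1 H2; split => //; case: f H2.
-
  move=> T a b El; apply: (simple_step H); try by rewrite El.
  + by left.
  + by have := iv_li H p; rewrite El.
-
  by move=> T a b old El; apply: case_CN1 H _.
-
  by move=> T a b old t1 k Hk El; apply: case_CNimm H _ Hk.
-
  move=> T a b old t1 k Hk El; apply: (simple_step H); try by rewrite El.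
  + by right; left; rewrite El.
  + have := iv_li H p; rewrite El => -[Hsz [Hok Hi]].
    split => //; split; first exact: CNok_frame Hok (leqnSn _) (fun t Ht => ext_le _ _ Ht).
    by split => // i Hi'; apply: Hi; apply: leq_trans Hi' Hk.
-
  by move=> T a b old t1 k Hk El; apply: case_CNmut H _ Hk.
-
  move=> T a b old t1 k Hk El; apply: (simple_step H); try by rewrite El.
  + by right; left; rewrite El.
  + have := iv_li H p; rewrite El => -[Hsz [Hok [Hi Hj]]].
    split => //; split; first exact: CNok_frame Hok (leqnSn _) (fun t Ht => ext_le _ _ Ht).
    split => //.
    have [Hsize _] := iv_mr H T p.
    apply: (@eq_from_nth _ vdef); first by rewrite Hsize; case: Hsz.
    by move=> i; rewrite Hsize => Hi'; apply: Hj; apply: leq_trans Hi' Hk.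
-
  by move=> T a b old t1 El; apply: case_CN2 H _.
-
  move=> T q s f dv El; apply: (simple_step H); try by rewrite El.
  + by right; right.
  + have := iv_li H p; rewrite El => -[Hr Hf].
    split => //; split => //; split; first exact: ltnSn.
    move=> Hsig; have [_ Hval [G1 [G2 G3]]] := valid_sig (iv_mr H) (iv_rb H Hr) Hsig.
    rewrite ext_le //; split => //.
    by case: f Hf El => [i|j] Hf _ /=; [rewrite G2 | rewrite G3].
-
  move=> T q s f dv x t0 El /=.
  case: eqP => Hsig.
    exact: case_RF1_valid H El Hsig.
  have := iv_li H p; rewrite El => -[Hr _].
  apply: (return_step H); try by rewrite El.
  all: try by move=> ? ? ? E; discriminate E.
  apply: SReadInvalid; exact: invalid_sig (iv_mr H) (iv_rb H Hr) Hsig.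
-
  move=> T q s k acc Hk El; apply: (simple_step H); try by rewrite El.
  + by left.
  + have := iv_li H p; rewrite El => -[Hr [Hk' [Hsz Hv]]].
    split => //; split => //; split; first by rewrite size_rcons Hsz.
    move=> /= Hsig i; rewrite ltnS leq_eqVlt nth_rcons Hsz => /orP [/eqP ->|Hik].
      by rewrite ltnn eqxx.
    by rewrite Hik; apply: Hv.
-
  move=> T q s k acc Hk El /=.
  have := iv_li H p; rewrite El => -[Hr [Hk' [Hsz Hv]]].
  apply: (return_step H); try by rewrite El.
  all: try by move=> ? ? ? E; discriminate E.
  case: eqP => Hsig.
    have [_ Hval [G1 [G2 G3]]] := valid_sig (iv_mr H) (iv_rb H Hr) Hsig.
    have -> : acc = (acont (A (cclk c)) T (q, s)).1.
      have Ek : k = nimm T by apply/eqP; rewrite eqn_leq Hk Hk'.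
      apply: (@eq_from_nth _ vdef); first by rewrite G1 Hsz.
      by move=> i; rewrite Hsz => Hi; rewrite G2 -?Ek // Hv.
    exact: SReadImmValid.
  apply: SReadImmInvalid; exact: invalid_sig (iv_mr H) (iv_rb H Hr) Hsig.
-
  move=> T q s j v Hne El /=.
  have := iv_li H p; rewrite El => -[Hr _].
  apply: (return_step H); try by rewrite El.
  all: try by move=> ? ? ? E; discriminate E.
  apply: SWriteInvalid; apply: invalid_sig (iv_mr H) (iv_rb H Hr) _; exact/eqP.
-
  move=> T q s j v Hsig El; apply: (simple_step H); try by rewrite El.
  + by left.
  + by have := iv_li H p; rewrite El => -[Hr Hj].
-
  move=> T q s j v w Ew El /=; subst w.
  have := iv_li H p; rewrite El => -[Hr [Hj Hw]].
  apply: (@mut_step c A p T q s j v _ _ H); try by rewrite El.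
  all: try by move=> ? ? ? E; discriminate E.
  + exact: Hr.
  + exact: Hj.
  + exact: Hw.
  + apply: SWriteValid; by have [] := valid_sig (iv_mr H) (iv_rb H Hr) Hw.
-
  move=> T q s j v w Hne El; apply: (simple_step H); try by rewrite El.
  + by left.
  + by have := iv_li H p; rewrite El => -[Hr [Hj _]].
-
  move=> T q s j e0 w Hne El /=.
  have := iv_li H p; rewrite El => -[Hr _].
  apply: (return_step H); try by rewrite El.
  all: try by move=> ? ? ? E; discriminate E.
  apply: SCasInvalid; apply: invalid_sig (iv_mr H) (iv_rb H Hr) _; exact/eqP.
-
  move=> T q s j e0 w Hsig Hne El /=.
  have := iv_li H p; rewrite El => -[Hr _].
  have [_ Hval [G1 [G2 G3]]] := valid_sig (iv_mr H) (iv_rb H Hr) Hsig.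
  apply: (return_step H); try by rewrite El.
  all: try by move=> ? ? ? E; discriminate E.
  have -> : nth vdef (mmut (cmem c) T q).2 j = nth vdef (acont (A (cclk c)) T (q, s)).2 j.
    by rewrite G3.
  by apply: SCasValidNeq => //; rewrite G3; apply/eqP.
-
  move=> T q s j e0 w Hsig Heq El; apply: (simple_step H); try by rewrite El.
  + by left.
  + by have := iv_li H p; rewrite El => -[Hr Hj].
-
  move=> T q s j e0 w x Ex El /=; subst x.
  have := iv_li H p; rewrite El => -[Hr [Hj [Hx He]]].
  have [_ Hval [G1 [G2 G3]]] := valid_sig (iv_mr H) (iv_rb H Hr) Hx.
  apply: (@mut_step c A p T q s j w _ _ H); try by rewrite El.
  all: try by move=> ? ? ? E; discriminate E.
  + exact: Hr.
  + exact: Hj.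
  + exact: Hx.
  + by apply: SCasValidEq => //; rewrite G3.
-
  move=> T q s j e0 w x Hne El; apply: (simple_step H); try by rewrite El.
  + by left.
  + by have := iv_li H p; rewrite El => -[Hr [Hj _]].
Qed.


Lemma reach_inv c : reachable nimm nmut vdef init_imm init_mut c -> exists A, InvA c A.
Proof.
elim=> [|c0 c1 _ [A H] Hs]; first by exists (fun _ => ainit Ty V n); exact: init_inv.
exact: step_inv H Hs.
Qed.

Lemma main_sec c : reachable nimm nmut vdef init_imm init_mut c ->
  spec_legal vdef (ainit Ty V n) (lin_seq c).
Proof. by move=> /reach_inv [A H]; exact: final_legal H. Qed.

End Proof.

Unset Implicit Arguments.
Set Strict Implicit.

Theorem mainTheorem1 (Ty : eqType) (nimm nmut : Ty -> nat) (V : eqType) (vdef : V)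
  (n : nat) (init_imm : Ty -> 'I_n -> nat -> V) (init_mut : Ty -> 'I_n -> seq V)
  (Hinit : forall T p, size (init_mut T p) = nmut T)
  (c : config Ty V n) :
  reachable nimm nmut vdef init_imm init_mut c ->
  spec_legal vdef (ainit Ty V n) (lin_seq c).
Proof.
move=> Hr; exact: (main_sec Hinit Hr).
Qed.
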